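(* Let $\Lambda$ be a unital commutative ring, $q\ge1$ an integer, $\mathfrak g$ a Lie algebra over $\Lambda$ and $\mathfrak h$ an ideal of $\mathfrak g$. There is a Lie action of $\mathfrak g$ on $\mathfrak h\otimes^q\mathfrak g$ given on generators by ${}^{g'}(h\otimes g)=[g',h]\otimes g+h\otimes[g',g]$ and ${}^{g}\{h\}=\{[g,h]\}$, and a Lie action of $\mathfrak g$ on $\mathfrak h\wedge^q\mathfrak g$ given by ${}^{g'}(h\wedge g)=[g',h]\wedge g+h\wedge[g',g]$ and ${}^{g}\{h\}=\{[g,h]\}$. With these actions, the homomorphisms $\xi^{\otimes}\colon\mathfrak h\otimes^q\mathfrak g\to\mathfrak g$ and $\xi^{\wedge}\colon\mathfrak h\wedge^q\mathfrak g\to\mathfrak g$ are $q$-crossed $\mathfrak g$-modules.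
   Context: All Lie algebras are over $\Lambda$. A Lie action of $\mathfrak g$ on $\mathfrak h$ is a $\Lambda$-bilinear map $(g,h)\mapsto{}^gh$ with ${}^{[g,g']}h={}^g({}^{g'}h)-{}^{g'}({}^gh)$ and ${}^g[h,h']=[{}^gh,h']+[h,{}^gh']$. A $q$-crossed $\mathfrak g$-module is a Lie homomorphism $\mu\colon\mathfrak k\to\mathfrak g$ with a Lie action of $\mathfrak g$ on $\mathfrak k$ such that $\mu({}^gk)=[g,\mu(k)]$, ${}^{\mu(k)}k'=[k,k']$ and $qk=0$ for all $g\in\mathfrak g$, $k,k'\in\mathfrak k$, $k\in\operatorname{Ker}\mu$ respectively. The non-abelian $q$-tensor product $\mathfrak h\otimes^q\mathfrak g$ is the Lie algebra generated by symbols $h\otimes g$ and $\{h\}$ ($h\in\mathfrak h$, $g\in\mathfrak g$) subject to, for all $h,h'\in\mathfrak h$, $g,g'\in\mathfrak g$, $\lambda,\lambda'\in\Lambda$: (1) $\lambda(h\otimes g)=\lambda h\otimes g=h\otimes\lambda g$; (2) $(h+h')\otimes g=h\otimes g+h'\otimes g$; (3) $h\otimes(g+g')=h\otimes g+h\otimes g'$; (4) $[h,h']\otimes g=h\otimes[h',g]-h'\otimes[h,g]$; (5) $h\otimes[g,g']=[g',h]\otimes g-[g,h]\otimes g'$; (6) $[h\otimes g,h'\otimes g']=[h,g]\otimes[h',g']$; (7) $[\{h'\},h\otimes g]=[qh',h]\otimes g+h\otimes[qh',g]$; (8) $\{\lambda h+\lambda'h'\}=\lambda\{h\}+\lambda'\{h'\}$;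 (9) $[\{h\},\{h'\}]=qh\otimes qh'$; (10) $\{[h,g]\}=q(h\otimes g)$. The $q$-exterior product $\mathfrak h\wedge^q\mathfrak g$ is its quotient by the relations $h\otimes h=0$ ($h\in\mathfrak h$), images written $h\wedge g,\{h\}$. The homomorphism $\xi^{\otimes}$ is given by $\xi^{\otimes}(h\otimes g)=[h,g]$, $\xi^{\otimes}(\{h\})=qh$, and $\xi^{\wedge}$ is the induced map on $\mathfrak h\wedge^q\mathfrak g$. *)

(* Defs.v *)
From HB Require Import structures.
From mathcomp Require Import all_boot all_algebra.
Set Implicit Arguments. Unset Strict Implicit. Unset Printing Implicit Defensive.
Import GRing.Theory.
Local Open Scope ring_scope.

HB.mixin Record Lmodule_isLie (R : comPzRingType) V of GRing.Lmodule R V := {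
  lie_br : V -> V -> V;
  lie_brZDl : forall (a : R) (x y z : V),
      lie_br (a *: x + y) z = a *: lie_br x z + lie_br y z;
  lie_brZDr : forall (a : R) (x y z : V),
      lie_br x (a *: y + z) = a *: lie_br x y + lie_br x z;
  lie_brxx : forall x : V, lie_br x x = 0;
  lie_jacobi : forall x y z : V,
      lie_br x (lie_br y z) + lie_br y (lie_br z x) + lie_br z (lie_br x y) = 0
}.

#[short(type="lieType")]
HB.structure Definition Lie (R : comPzRingType) :=
  { V of Lmodule_isLie R V & GRing.Lmodule R V }.

Notation "⟦ x , y ⟧" := (lie_br x y) (format "⟦ x ,  y ⟧").

Section LieDefs.
Variable R : comPzRingType.

Definition lie_hom (A B : lieType R) (f : A -> B) : Prop :=
  (forall (a : R) (x y : A), f (a *: x + y) = a *: f x + f y) /\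
  (forall x y : A, f ⟦x, y⟧ = ⟦f x, f y⟧).

Definition lie_ideal (g : lieType R) (H : g -> Prop) : Prop :=
  [/\ H 0,
      (forall (a : R) (x y : g), H x -> H y -> H (a *: x + y)) &
      (forall x y : g, H y -> H ⟦x, y⟧)].

Definition lie_action (g k : lieType R) (act : g -> k -> k) : Prop :=
  [/\ (forall (a : R) (x y : g) (u : k), act (a *: x + y) u = a *: act x u + act y u),
      (forall (a : R) (x : g) (u v : k), act x (a *: u + v) = a *: act x u + act x v),
      (forall (x y : g) (u : k), act ⟦x, y⟧ u = act x (act y u) - act y (act x u)) &
      (forall (x : g) (u v : k), act x ⟦u, v⟧ = ⟦act x u, v⟧ + ⟦u, act x v⟧)].

Definition q_crossed_module (q : nat) (k g : lieType R) (mu : k -> g)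
    (act : g -> k -> k) : Prop :=
  [/\ lie_hom mu, lie_action act,
      (forall (x : g) (u : k), mu (act x u) = ⟦x, mu u⟧),
      (forall u v : k, act (mu u) v = ⟦u, v⟧) &
      (forall u : k, mu u = 0 -> u *+ q = 0)].

(* Defining relations (1)-(10) of the non-abelian q-tensor product h (x)^q g,
   for h an ideal H of g (acting on itself by the bracket), interpreted in a
   Lie algebra L via t h x := "h (x) x" and c h := "{h}", for h in H. *)
Definition qtensor_rels (q : nat) (wedge : bool) (g : lieType R) (H : g -> Prop)
    (L : lieType R) (t : g -> g -> L) (c : g -> L) : Prop :=
  (forall (a : R) h x, H h ->
                    a *: t h x = t (a *: h) x /\ a *: t h x = t h (a *: x)) /\
      (forall h h' x, H h -> H h' -> t (h + h') x = t h x + t h' x) /\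
      (forall h x x', H h -> t h (x + x') = t h x + t h x') /\
      (forall h h' x, H h -> H h' ->
                    t ⟦h, h'⟧ x = t h ⟦h', x⟧ - t h' ⟦h, x⟧) /\
      (forall h x x', H h -> t h ⟦x, x'⟧ = t ⟦x', h⟧ x - t ⟦x, h⟧ x') /\
      (forall h x h' x', H h -> H h' ->
                    ⟦t h x, t h' x'⟧ = t ⟦h, x⟧ ⟦h', x'⟧) /\
      (forall h' h x, H h' -> H h ->
                    ⟦c h', t h x⟧ = t ⟦h' *+ q, h⟧ x + t h ⟦h' *+ q, x⟧) /\
      (forall (a a' : R) h h', H h -> H h' ->
                    c (a *: h + a' *: h') = a *: c h + a' *: c h') /\
      (forall h h', H h -> H h' -> ⟦c h, c h'⟧ = t (h *+ q) (h' *+ q)) /\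
      (forall h x, H h -> c ⟦h, x⟧ = t h x *+ q) /\
      (wedge -> forall h, H h -> t h h = 0).

(* (T, t, c) is the Lie algebra presented by the generators t h x, c h
   (h in H, x in g) subject to [qtensor_rels]: it satisfies the relations and
   is initial among Lie algebras over R equipped with such data.
   wedge = false: T is h (x)^q g;  wedge = true: T is h /\^q g. *)
Definition is_qtensor_product (q : nat) (wedge : bool) (g : lieType R)
    (H : g -> Prop) (T : lieType R) (t : g -> g -> T) (c : g -> T) : Prop :=
  qtensor_rels q wedge H t c /\
  forall (L : lieType R) (t' : g -> g -> L) (c' : g -> L),
    qtensor_rels q wedge H t' c' ->
    (exists f : T -> L, lie_hom f /\
        (forall h x, H h -> f (t h x) = t' h x) /\ (forall h, H h -> f (c h) = c' h)) /\
    (forall f1 f2 : T -> L, lie_hom f1 -> lie_hom f2 ->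
        (forall h x, H h -> f1 (t h x) = t' h x) -> (forall h, H h -> f1 (c h) = c' h) ->
        (forall h x, H h -> f2 (t h x) = t' h x) -> (forall h, H h -> f2 (c h) = c' h) ->
        forall u, f1 u = f2 u).

End LieDefs.

(* Main.v *)
Require Import Defs.
From HB Require Import structures.
From mathcomp Require Import all_boot all_algebra.
From mathcomp Require Import boolp.
Import GRing.Theory.
Local Open Scope ring_scope.

Module Aux.
Set Implicit Arguments. Unset Strict Implicit.

Inductive zx := ZV of nat | ZA of zx & zx | ZN of zx | Z0.

Fixpoint zev (V : zmodType) (env : seq V) (e : zx) : V :=
  match e with
  | ZV i => nth 0 env i
  | ZA a b => zev env a + zev env b
  | ZN a => - zev env a
  | Z0 => 0
  end.

Fixpoint addc (s1 s2 : seq int) : seq int :=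
  match s1, s2 with
  | [::], s => s
  | s, [::] => s
  | a :: s1', b :: s2' => (a + b) :: addc s1' s2'
  end.

Fixpoint zco (e : zx) : seq int :=
  match e with
  | ZV i => rcons (nseq i 0) 1
  | ZA a b => addc (zco a) (zco b)
  | ZN a => map (fun z => - z) (zco a)
  | Z0 => [::]
  end.

Fixpoint lin (V : zmodType) (env : seq V) (s : seq int) : V :=
  match s with
  | [::] => 0
  | k :: s' => (head 0 env) *~ k + lin (behead env) s'
  end.

Lemma lin_addc (V : zmodType) s1 s2 (env : seq V) :
  lin env (addc s1 s2) = lin env s1 + lin env s2.
Proof.
elim: s1 s2 env => [|a s1 IH] [|b s2] env /=; rewrite ?addr0 ?add0r //.
by rewrite IH mulrzDr addrACA.
Qed.

Lemma lin_opp (V : zmodType) s (env : seq V) :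
  lin env (map (fun z => - z) s) = - lin env s.
Proof.
elim: s env => [|a s IH] env /=; first by rewrite oppr0.
by rewrite IH mulrNz opprD.
Qed.

Lemma lin_var (V : zmodType) i (env : seq V) :
  lin env (rcons (nseq i 0) 1) = nth 0 env i.
Proof.
elim: i env => [|i IH] [|x env] /=; rewrite ?addr0 ?mulr0z ?add0r ?mulr1z //.
all: try by rewrite IH.
by rewrite IH; case: i {IH}.
Qed.

Lemma zev_lin (V : zmodType) (env : seq V) e : zev env e = lin env (zco e).
Proof.
elim: e => [i|a IHa b IHb|a IHa|] /=.
- by rewrite lin_var.
- by rewrite lin_addc IHa IHb.
- by rewrite lin_opp IHa.
- by [].
Qed.

Lemma lin_all0 (V : zmodType) (env : seq V) s :
  all (fun z => z == 0) s -> lin env s = 0.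
Proof.
elim: s env => [|a s IH] env //= /andP[/eqP -> H].
by rewrite mulr0z add0r IH.
Qed.

Definition zcheck (a b : zx) : bool := all (fun z => z == 0) (zco (ZA a (ZN b))).

Lemma zsound (V : zmodType) (env : seq V) a b :
  zcheck a b = true -> zev env a = zev env b.
Proof.
move=> H; apply/eqP; rewrite -subr_eq0.
have := lin_all0 env H; rewrite -zev_lin /= => ->.
by [].
Qed.

Ltac zinlist x l :=
  match l with
  | nil => constr:(false)
  | cons ?y _ => let _ := constr:(@Logic.eq_refl _ x : x = y) in constr:(true)
  | cons _ ?l' => zinlist x l'
  end.

Ltac zcollect t env :=
  lazymatch t with
  | @GRing.add _ ?a ?b => let env := zcollect a env in zcollect b env
  | @GRing.opp _ ?a => zcollect a env
  | @GRing.zero _ => env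
  | _ => let b := zinlist t env in
         lazymatch b with true => env | false => constr:(cons t env) end
  end.

Ltac zlookup x l :=
  match l with
  | cons ?y _ => let _ := constr:(@Logic.eq_refl _ x : x = y) in constr:(0%N)
  | cons _ ?l' => let n := zlookup x l' in constr:(S n)
  end.

Ltac zreify t env :=
  lazymatch t with
  | @GRing.add _ ?a ?b => let ea := zreify a env in let eb := zreify b env in constr:(ZA ea eb)
  | @GRing.opp _ ?a => let ea := zreify a env in constr:(ZN ea)
  | @GRing.zero _ => constr:(Z0)
  | _ => let n := zlookup t env in constr:(ZV n)
  end.

Ltac zmod_solve :=
  lazymatch goal with
  | |- @eq ?V ?l ?r =>
    let env := zcollect l (@nil V) in
    let env := zcollect r env in
    let el := zreify l env in
    let er := zreify r env in
    exact (@zsound _ env el er (erefl true))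
  end.




Section Lin.
Variables (R : comPzRingType) (U V : lmodType R) (f : U -> V).
Hypothesis hf : forall (a : R) x y, f (a *: x + y) = a *: f x + f y.
Lemma lf_D x y : f (x + y) = f x + f y.
Proof. by have := hf 1 x y; rewrite !scale1r. Qed.
Lemma lf_0 : f 0 = 0.
Proof. by apply/eqP; rewrite -(addrI (f 0) (_ : f 0 + f 0 = f 0 + 0)) // -lf_D !addr0. Qed.
Lemma lf_Z a x : f (a *: x) = a *: f x.
Proof. by rewrite -[a *: x]addr0 hf lf_0 addr0. Qed.
Lemma lf_N x : f (- x) = - f x.
Proof. by rewrite -scaleN1r lf_Z scaleN1r. Qed.
Lemma lf_B x y : f (x - y) = f x - f y.
Proof. by rewrite lf_D lf_N. Qed.
Lemma lf_Mn x n : f (x *+ n) = f x *+ n.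
Proof. by elim: n => [|n IH]; rewrite ?mulr0n ?lf_0 // !mulrS lf_D IH. Qed.
End Lin.

Section LieBasic.
Variables (R : comPzRingType) (L : lieType R).
Implicit Types x y z : L.
Lemma brZDl a x y z : ⟦a *: x + y, z⟧ = a *: ⟦x, z⟧ + ⟦y, z⟧.
Proof. exact: lie_brZDl. Qed.
Lemma brZDr a x y z : ⟦z, a *: x + y⟧ = a *: ⟦z, x⟧ + ⟦z, y⟧.
Proof. exact: lie_brZDr. Qed.
Lemma brDl x y z : ⟦x + y, z⟧ = ⟦x, z⟧ + ⟦y, z⟧.
Proof. exact: (lf_D (f := fun x => ⟦x, z⟧) (fun a x y => brZDl a x y z)). Qed.
Lemma brDr x y z : ⟦z, x + y⟧ = ⟦z, x⟧ + ⟦z, y⟧.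
Proof. exact: (lf_D (f := fun x => ⟦z, x⟧) (fun a x y => brZDr a x y z)). Qed.
Lemma br0l z : ⟦0, z⟧ = 0 :> L.
Proof. exact: (lf_0 (f := fun x : L => ⟦x, z⟧) (fun a x y => brZDl a x y z)). Qed.
Lemma br0r z : ⟦z, 0⟧ = 0 :> L.
Proof. exact: (lf_0 (f := fun x : L => ⟦z, x⟧) (fun a x y => brZDr a x y z)). Qed.
Lemma brZl a x z : ⟦a *: x, z⟧ = a *: ⟦x, z⟧.
Proof. exact: (lf_Z (f := fun x => ⟦x, z⟧) (fun a x y => brZDl a x y z)). Qed.
Lemma brZr a x z : ⟦z, a *: x⟧ = a *: ⟦z, x⟧.
Proof. exact: (lf_Z (f := fun x => ⟦z, x⟧) (fun a x y => brZDr a x y z)). Qed.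
Lemma brNl x z : ⟦- x, z⟧ = - ⟦x, z⟧.
Proof. exact: (lf_N (f := fun x => ⟦x, z⟧) (fun a x y => brZDl a x y z)). Qed.
Lemma brNr x z : ⟦z, - x⟧ = - ⟦z, x⟧.
Proof. exact: (lf_N (f := fun x => ⟦z, x⟧) (fun a x y => brZDr a x y z)). Qed.
Lemma brBl x y z : ⟦x - y, z⟧ = ⟦x, z⟧ - ⟦y, z⟧.
Proof. by rewrite brDl brNl. Qed.
Lemma brBr x y z : ⟦z, x - y⟧ = ⟦z, x⟧ - ⟦z, y⟧.
Proof. by rewrite brDr brNr. Qed.
Lemma brMnl x z n : ⟦x *+ n, z⟧ = ⟦x, z⟧ *+ n.
Proof. exact: (lf_Mn (f := fun x => ⟦x, z⟧) (fun a x y => brZDl a x y z)). Qed.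
Lemma brMnr x z n : ⟦z, x *+ n⟧ = ⟦z, x⟧ *+ n.
Proof. exact: (lf_Mn (f := fun x => ⟦z, x⟧) (fun a x y => brZDr a x y z)). Qed.
Lemma brxx x : ⟦x, x⟧ = 0.
Proof. exact: lie_brxx. Qed.
Lemma brC x y : ⟦x, y⟧ = - ⟦y, x⟧.
Proof.
have := brxx (x + y); rewrite brDl !brDr !brxx add0r addr0 => /eqP.
by rewrite addr_eq0 => /eqP.
Qed.
Lemma jacL x y z : ⟦x, ⟦y, z⟧⟧ = ⟦⟦x, y⟧, z⟧ + ⟦y, ⟦x, z⟧⟧.
Proof.
have := lie_jacobi x y z; rewrite [⟦z, x⟧]brC brNr [⟦z, _⟧]brC => /eqP.
rewrite -subr_eq0 => /eqP H; rewrite -[LHS]subr0 -H.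
rewrite [⟦y, ⟦x, z⟧⟧]brC [⟦⟦x,y⟧, z⟧]brC; zmod_solve.
Qed.
End LieBasic.


Section Hom.
Variables (R : comPzRingType) (A B : lieType R) (f : A -> B) (hf : lie_hom f).
Lemma hom_ZD a x y : f (a *: x + y) = a *: f x + f y. Proof. exact: hf.1. Qed.
Lemma hom_br x y : f ⟦x, y⟧ = ⟦f x, f y⟧. Proof. exact: hf.2. Qed.
Lemma hom_D x y : f (x + y) = f x + f y. Proof. exact: (lf_D (f:=f) hom_ZD). Qed.
Lemma hom_0 : f 0 = 0. Proof. exact: (lf_0 (f:=f) hom_ZD). Qed.
Lemma hom_Z a x : f (a *: x) = a *: f x. Proof. exact: (lf_Z (f:=f) hom_ZD). Qed.
Lemma hom_N x : f (- x) = - f x. Proof. exact: (lf_N (f:=f) hom_ZD). Qed.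
Lemma hom_B x y : f (x - y) = f x - f y. Proof. exact: (lf_B (f:=f) hom_ZD). Qed.
Lemma hom_Mn x n : f (x *+ n) = f x *+ n. Proof. exact: (lf_Mn (f:=f) hom_ZD). Qed.
End Hom.

Section Ideal.
Variables (R : comPzRingType) (g : lieType R) (H : g -> Prop) (hH : lie_ideal H).
Lemma H0 : H 0. Proof. by case: hH. Qed.
Lemma HZD a x y : H x -> H y -> H (a *: x + y). Proof. by case: hH => _ P _; apply: P. Qed.
Lemma HD x y : H x -> H y -> H (x + y). Proof. by move=> ? ?; rewrite -[x]scale1r; apply: HZD. Qed.
Lemma HZ a x : H x -> H (a *: x). Proof. by move=> ?; rewrite -[_ *: _]addr0; apply: HZD => //; apply: H0. Qed.
Lemma HN x : H x -> H (- x). Proof. by move=> ?; rewrite -scaleN1r; apply: HZ. Qed.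
Lemma HB x y : H x -> H y -> H (x - y). Proof. by move=> ? ?; apply: HD => //; apply: HN. Qed.
Lemma HMn x n : H x -> H (x *+ n).
Proof. move=> ?; elim: n => [|n IH]; first by rewrite mulr0n; apply: H0.
by rewrite mulrS; apply: HD. Qed.
Lemma Hbrr x y : H y -> H ⟦x, y⟧. Proof. by case: hH => _ _ P; apply: P. Qed.
Lemma Hbrl x y : H x -> H ⟦x, y⟧. Proof. by move=> ?; rewrite brC; apply/HN/Hbrr. Qed.
End Ideal.

Section Rels.
Variables (R : comPzRingType) (q : nat) (wedge : bool) (g : lieType R) (H : g -> Prop)
  (L : lieType R) (t : g -> g -> L) (c : g -> L)
  (hr0 : lie_ideal H /\ qtensor_rels q wedge H t c).
Let hH := hr0.1.
Let hr := hr0.2.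

Lemma r1l a h x : H h -> t (a *: h) x = a *: t h x. Proof. by move=> Hh; case: hr => /(_ a h x Hh) []. Qed.
Lemma r1r a h x : H h -> t h (a *: x) = a *: t h x. Proof. by move=> Hh; case: hr => /(_ a h x Hh) []. Qed.
Lemma r2 h h' x : H h -> H h' -> t (h + h') x = t h x + t h' x. Proof. by case: hr => _ [P _]; apply: P. Qed.
Lemma r3 h x x' : H h -> t h (x + x') = t h x + t h x'. Proof. by case: hr => _ [_ [P _]]; apply: P. Qed.
Lemma r4 h h' x : H h -> H h' -> t ⟦h, h'⟧ x = t h ⟦h', x⟧ - t h' ⟦h, x⟧.
Proof. by case: hr => _ [_ [_ [P _]]]; apply: P. Qed.
Lemma r5 h x x' : H h -> t h ⟦x, x'⟧ = t ⟦x', h⟧ x - t ⟦x, h⟧ x'.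
Proof. by case: hr => _ [_ [_ [_ [P _]]]]; apply: P. Qed.
Lemma r6 h x h' x' : H h -> H h' -> ⟦t h x, t h' x'⟧ = t ⟦h, x⟧ ⟦h', x'⟧.
Proof. by case: hr => _ [_ [_ [_ [_ [P _]]]]]; apply: P. Qed.
Lemma r7 h' h x : H h' -> H h -> ⟦c h', t h x⟧ = t ⟦h' *+ q, h⟧ x + t h ⟦h' *+ q, x⟧.
Proof. by case: hr => _ [_ [_ [_ [_ [_ [P _]]]]]]; apply: P. Qed.
Lemma r8 a a' h h' : H h -> H h' -> c (a *: h + a' *: h') = a *: c h + a' *: c h'.
Proof. by case: hr => _ [_ [_ [_ [_ [_ [_ [P _]]]]]]]; apply: P. Qed.
Lemma r9 h h' : H h -> H h' -> ⟦c h, c h'⟧ = t (h *+ q) (h' *+ q).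
Proof. by case: hr => _ [_ [_ [_ [_ [_ [_ [_ [P _]]]]]]]]; apply: P. Qed.
Lemma r10 h x : H h -> c ⟦h, x⟧ = t h x *+ q.
Proof. by case: hr => _ [_ [_ [_ [_ [_ [_ [_ [_ [P _]]]]]]]]]; apply: P. Qed.
Lemma r11 h : wedge -> H h -> t h h = 0.
Proof. by case: hr => _ [_ [_ [_ [_ [_ [_ [_ [_ [_ P]]]]]]]]] w; apply: P. Qed.

Lemma tDr h x x' : H h -> t h (x + x') = t h x + t h x'. Proof. exact: r3. Qed.
Lemma tDl h h' x : H h -> H h' -> t (h + h') x = t h x + t h' x. Proof. exact: r2. Qed.
Lemma tZl a h x : H h -> t (a *: h) x = a *: t h x. Proof. exact: r1l. Qed.
Lemma tZr a h x : H h -> t h (a *: x) = a *: t h x. Proof. exact: r1r. Qed.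
Lemma t0l x : t 0 x = 0.
Proof. by rewrite -(scale0r (0 : g)) tZl ?scale0r //; apply: H0. Qed.
Lemma t0r h : H h -> t h 0 = 0.
Proof. by move=> Hh; rewrite -(scale0r (0 : g)) tZr ?scale0r. Qed.
Lemma tNl h x : H h -> t (- h) x = - t h x.
Proof. by move=> Hh; rewrite -scaleN1r tZl // scaleN1r. Qed.
Lemma tNr h x : H h -> t h (- x) = - t h x.
Proof. by move=> Hh; rewrite -scaleN1r tZr // scaleN1r. Qed.
Lemma tBl h h' x : H h -> H h' -> t (h - h') x = t h x - t h' x.
Proof. by move=> ? ?; rewrite tDl ?tNl //; apply: HN. Qed.
Lemma tBr h x x' : H h -> t h (x - x') = t h x - t h x'.
Proof. by move=> ?; rewrite tDr ?tNr. Qed.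
Lemma tMnl h x n : H h -> t (h *+ n) x = t h x *+ n.
Proof.
move=> Hh; elim: n => [|n IH]; rewrite ?mulr0n ?t0l // !mulrS tDl ?IH //.
exact: HMn.
Qed.
Lemma tMnr h x n : H h -> t h (x *+ n) = t h x *+ n.
Proof. by move=> Hh; elim: n => [|n IH]; rewrite ?mulr0n ?t0r // !mulrS tDr ?IH. Qed.
Lemma cZD a h h' : H h -> H h' -> c (a *: h + h') = a *: c h + c h'.
Proof. by move=> ? ?; rewrite -[h' in LHS]scale1r r8 // scale1r. Qed.
Lemma cD h h' : H h -> H h' -> c (h + h') = c h + c h'.
Proof. by move=> ? ?; rewrite -[h in LHS]scale1r cZD // scale1r. Qed.
Lemma c0 : c 0 = 0.
Proof. by apply/eqP; rewrite -(addrI (c 0) (_ : c 0 + c 0 = c 0 + 0)) // -cD ?addr0 //; apply: H0. Qed.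
Lemma cZ a h : H h -> c (a *: h) = a *: c h.
Proof. by move=> ?; rewrite -[_ *: h]addr0 cZD ?c0 ?addr0 //; apply: H0. Qed.
Lemma cN h : H h -> c (- h) = - c h.
Proof. by move=> ?; rewrite -scaleN1r cZ // scaleN1r. Qed.
Lemma cB h h' : H h -> H h' -> c (h - h') = c h - c h'.
Proof. by move=> ? ?; rewrite cD ?cN //; apply: HN. Qed.
Lemma cMn h n : H h -> c (h *+ n) = c h *+ n.
Proof.
move=> Hh; elim: n => [|n IH]; rewrite ?mulr0n ?c0 // !mulrS cD ?IH //.
exact: HMn.
Qed.
Lemma tsym h k : wedge -> H h -> H k -> t k h + t h k = 0.
Proof.
move=> w Hh Hk; have := r11 w (HD hH Hh Hk).
rewrite tDl // !tDr // !r11 // add0r addr0 => E; by rewrite addrC.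
Qed.
End Rels.

Ltac hs0 hH :=
  lazymatch goal with
  | |- _ (?a + ?b) => apply: (HD hH); hs0 hH
  | |- _ (- ?a) => apply: (HN hH); hs0 hH
  | |- _ (?a *: ?b) => apply: (HZ hH); hs0 hH
  | |- _ (?a *+ ?n) => apply: (HMn hH); hs0 hH
  | |- _ ⟦?x, ?y⟧ => first [ (apply: (Hbrr hH); hs0 hH) | (apply: (Hbrl hH); hs0 hH) ]
  | |- _ 0 => exact: (H0 hH)
  | _ => assumption
  end.
Ltac hs := match goal with hH : lie_ideal _ |- _ => hs0 hH end.


Section Sub.
Variables (R : comPzRingType) (T : lieType R) (P : T -> Prop).
Hypotheses (P0 : P 0) (PZD : forall a u v, P u -> P v -> P (a *: u + v))
  (Pbr : forall u v, P u -> P v -> P ⟦u, v⟧).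
Definition Pb : pred T := fun u => `[< P u >].
Definition sub : Type := let _ := (P0, PZD, Pbr) in {u : T | Pb u}.
HB.instance Definition _ := Choice.on sub.
Let Pb0 : Pb 0. Proof. exact/asboolP. Qed.
Let PbZD a u v : Pb u -> Pb v -> Pb (a *: u + v).
Proof. by move=> /asboolP ? /asboolP ?; apply/asboolP; apply: PZD. Qed.
Let Pbbr u v : Pb u -> Pb v -> Pb ⟦u, v⟧.
Proof. by move=> /asboolP ? /asboolP ?; apply/asboolP; apply: Pbr. Qed.
Definition s0 : sub := exist _ 0 Pb0.
Let PbD u v : Pb u -> Pb v -> Pb (u + v).
Proof. by move=> Hu Hv; have := PbZD 1 Hu Hv; rewrite scale1r. Qed.
Let PbN u : Pb u -> Pb (- u).
Proof. by move=> Hu; have := PbZD (-1) Hu Pb0; rewrite addr0 scaleN1r. Qed.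
Let PbZ a u : Pb u -> Pb (a *: u).
Proof. by move=> Hu; have := PbZD a Hu Pb0; rewrite addr0. Qed.
Definition sadd (u v : sub) : sub := exist _ (val u + val v) (PbD (valP u) (valP v)).
Definition sopp (u : sub) : sub := exist _ (- val u) (PbN (valP u)).
Definition sscale (a : R) (u : sub) : sub := exist _ (a *: val u) (PbZ a (valP u)).
Definition sbr (u v : sub) : sub := exist _ ⟦val u, val v⟧ (Pbbr (valP u) (valP v)).
Lemma saddA : associative sadd.
Proof. by move=> u v w; apply: val_inj; rewrite /= addrA. Qed.
Lemma saddC : commutative sadd.
Proof. by move=> u v; apply: val_inj; rewrite /= addrC. Qed.
Lemma sadd0 : left_id s0 sadd.
Proof. by move=> u; apply: val_inj; rewrite /= add0r. Qed.
Lemma saddN : left_inverse s0 sopp sadd.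
Proof. by move=> u; apply: val_inj; rewrite /= addNr. Qed.
HB.instance Definition _ := GRing.isZmodule.Build sub saddA saddC sadd0 saddN.
Lemma sscaleA a b (u : sub) : sscale a (sscale b u) = sscale (a * b) u.
Proof. by apply: val_inj; rewrite /= scalerA. Qed.
Lemma sscale1 : left_id 1 sscale.
Proof. by move=> u; apply: val_inj; rewrite /= scale1r. Qed.
Lemma sscaleDr : right_distributive sscale +%R.
Proof. by move=> a u v; apply: val_inj; rewrite /= scalerDr. Qed.
Lemma sscaleDl (v : sub) : {morph sscale^~ v : a b / a + b}.
Proof. by move=> a b; apply: val_inj; rewrite /= scalerDl. Qed.
HB.instance Definition _ := GRing.Zmodule_isLmodule.Build R sub sscaleA sscale1 sscaleDr sscaleDl.
Lemma sbrZDl (a : R) (x y z : sub) : sbr (a *: x + y) z = a *: sbr x z + sbr y z.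
Proof. by apply: val_inj; rewrite /= brZDl. Qed.
Lemma sbrZDr (a : R) (x y z : sub) : sbr x (a *: y + z) = a *: sbr x y + sbr x z.
Proof. by apply: val_inj; rewrite /= brZDr. Qed.
Lemma sbrxx (x : sub) : sbr x x = 0.
Proof. by apply: val_inj; rewrite /= brxx. Qed.
Lemma sjac (x y z : sub) : sbr x (sbr y z) + sbr y (sbr z x) + sbr z (sbr x y) = 0.
Proof. by apply: val_inj; rewrite /= lie_jacobi. Qed.
HB.instance Definition _ := Lmodule_isLie.Build R sub sbrZDl sbrZDr sbrxx sjac.

Lemma val_hom : lie_hom (val : sub -> T).
Proof. by split. Qed.
Lemma val_sub_inj : injective (val : sub -> T).
Proof. exact: val_inj. Qed.
Definition sin (u : T) : sub := insubd s0 u.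
Lemma val_sin u : P u -> val (sin u) = u.
Proof. by move=> Pu; rewrite /sin val_insubd; case: ifP => // /asboolP. Qed.
End Sub.

Section Gen.
Variables (R : comPzRingType) (q : nat) (wedge : bool) (g : lieType R) (H : g -> Prop)
  (hH : lie_ideal H).

Lemma hom_comp (A B C : lieType R) (f : A -> B) (f' : B -> C) :
  lie_hom f -> lie_hom f' -> lie_hom (fun u => f' (f u)).
Proof.
move=> hf hf'; split=> [a x y|x y]; first by rewrite !(hom_ZD hf, hom_ZD hf').
by rewrite !(hom_br hf, hom_br hf').
Qed.

Lemma rels_hom (A B : lieType R) (t : g -> g -> A) (c : g -> A) (f : A -> B) :
  lie_hom f -> qtensor_rels q wedge H t c ->
  qtensor_rels q wedge H (fun h x => f (t h x)) (fun h => f (c h)).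
Proof.
move=> hf hr; have hr2 := conj hH hr.
split; [move=> a h x Hh; rewrite (tZl hr2) ?(tZr hr2) // (hom_Z hf) //|].
split; [move=> h h' x Hh Hh'; by rewrite (tDl hr2) // (hom_D hf)|].
split; [move=> h x x' Hh; by rewrite (tDr hr2) // (hom_D hf)|].
split; [move=> h h' x Hh Hh'; by rewrite (r4 hr2) // (hom_B hf)|].
split; [move=> h x x' Hh; by rewrite (r5 hr2) // (hom_B hf)|].
split; [move=> h x h' x' Hh Hh'; by rewrite -(hom_br hf) (r6 hr2)|].
split; [move=> h' h x Hh' Hh; by rewrite -(hom_br hf) (r7 hr2) // (hom_D hf)|].
split; [move=> a a' h h' Hh Hh'; by rewrite (r8 hr2) // (hom_D hf) !(hom_Z hf)|].
split; [move=> h h' Hh Hh'; by rewrite -(hom_br hf) (r9 hr2)|].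
split; [move=> h x Hh; by rewrite (r10 hr2) // (hom_Mn hf)|].
move=> w h Hh; by rewrite (r11 hr2) // (hom_0 hf).
Qed.

Lemma rels_pull (A B : lieType R) (t : g -> g -> B) (c : g -> B) (t' : g -> g -> A) (c' : g -> A)
  (f : A -> B) : lie_hom f -> injective f ->
  (forall h x, H h -> f (t' h x) = t h x) -> (forall h, H h -> f (c' h) = c h) ->
  qtensor_rels q wedge H t c -> qtensor_rels q wedge H t' c'.
Proof.
move=> hf fi ft fc hr; have hr2 := conj hH hr.
split. { move=> a h x Hh; split; apply: fi; rewrite (hom_Z hf) !ft; try solve [hs].
  - by rewrite (tZl hr2).
  - by rewrite (tZr hr2). }
split. { move=> h h' x Hh Hh'; apply: fi; rewrite (hom_D hf) !ft; try solve [hs].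
  by rewrite (tDl hr2). }
split. { move=> h x x' Hh; apply: fi; rewrite (hom_D hf) !ft; try solve [hs].
  by rewrite (tDr hr2). }
split. { move=> h h' x Hh Hh'; apply: fi; rewrite (hom_B hf) !ft; try solve [hs].
  by rewrite (r4 hr2). }
split. { move=> h x x' Hh; apply: fi; rewrite (hom_B hf) !ft; try solve [hs].
  by rewrite (r5 hr2). }
split. { move=> h x h' x' Hh Hh'; apply: fi; rewrite (hom_br hf) !ft; try solve [hs].
  by rewrite (r6 hr2). }
split. { move=> h' h x Hh' Hh; apply: fi; rewrite (hom_br hf) (hom_D hf) !ft ?fc; try solve [hs].
  by rewrite (r7 hr2). }
split. { move=> a a' h h' Hh Hh'; apply: fi; rewrite (hom_D hf) !(hom_Z hf) !fc; try solve [hs].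
  by rewrite (r8 hr2). }
split. { move=> h h' Hh Hh'; apply: fi; rewrite (hom_br hf) !ft ?fc; try solve [hs].
  by rewrite (r9 hr2). }
split. { move=> h x Hh; apply: fi; rewrite (hom_Mn hf) !ft ?fc; try solve [hs].
  by rewrite (r10 hr2). }
move=> w h Hh; apply: fi; rewrite (hom_0 hf) ft; try solve [hs].
by rewrite (r11 hr2).
Qed.

Lemma qt_ind (T : lieType R) (t : g -> g -> T) (c : g -> T)
  (hT : is_qtensor_product q wedge H t c) (P : T -> Prop)
  (P0 : P 0) (PZD : forall a u v, P u -> P v -> P (a *: u + v))
  (Pbr : forall u v, P u -> P v -> P ⟦u, v⟧)
  (Pt : forall h x, H h -> P (t h x)) (Pc : forall h, H h -> P (c h)) :
  forall u, P u.
Proof.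
pose S := sub P0 PZD Pbr.
pose t' h x : S := sin P0 PZD Pbr (t h x).
pose c' h : S := sin P0 PZD Pbr (c h).
have ft h x : H h -> val (t' h x) = t h x by move=> Hh; rewrite val_sin //; apply: Pt.
have fc h : H h -> val (c' h) = c h by move=> Hh; rewrite val_sin //; apply: Pc.
have hr' : qtensor_rels q wedge H t' c'.
  exact: (rels_pull (val_hom P0 PZD Pbr) (@val_sub_inj _ _ _ P0 PZD Pbr) ft fc hT.1).
have [[f [hf [f1 f2]]] _] := hT.2 S t' c' hr'.
have [_ U] := hT.2 T t c hT.1.
move=> u.
have E : val (f u) = u.
  apply: (U (fun u => val (f u)) id).
  - exact: (hom_comp hf (val_hom P0 PZD Pbr)).
  - by split.
  - by move=> h x Hh; rewrite f1 // ft.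
  - by move=> h Hh; rewrite f2 // fc.
  - by [].
  - by [].
by rewrite -E; apply/asboolP; exact: (valP (f u)).
Qed.
End Gen.


Definition dual (R : comPzRingType) (L : lieType R) : Type := (L * L)%type.
HB.instance Definition _ (R : comPzRingType) (L : lieType R) :=
  GRing.Lmodule.copy (dual L) (L * L)%type.

Section Dual.
Variables (R : comPzRingType) (L : lieType R).
Definition dbr (u v : dual L) : dual L := (⟦u.1, v.1⟧, ⟦u.1, v.2⟧ + ⟦u.2, v.1⟧).
Lemma dpair (u v : dual L) : u.1 = v.1 -> u.2 = v.2 -> u = v.
Proof. by case: u v => [? ?] [? ?] /= -> ->. Qed.
Lemma dD1 (u v : dual L) : (u + v).1 = u.1 + v.1. Proof. by []. Qed.
Lemma dD2 (u v : dual L) : (u + v).2 = u.2 + v.2. Proof. by []. Qed.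
Lemma dZ1 a (u : dual L) : (a *: u).1 = a *: u.1. Proof. by []. Qed.
Lemma dZ2 a (u : dual L) : (a *: u).2 = a *: u.2. Proof. by []. Qed.
Lemma dN1 (u : dual L) : (- u).1 = - u.1. Proof. by []. Qed.
Lemma dN2 (u : dual L) : (- u).2 = - u.2. Proof. by []. Qed.
Lemma d01 : (0 : dual L).1 = 0. Proof. by []. Qed.
Lemma d02 : (0 : dual L).2 = 0. Proof. by []. Qed.
Lemma dbr1 (u v : dual L) : (dbr u v).1 = ⟦u.1, v.1⟧. Proof. by []. Qed.
Lemma dbr2 (u v : dual L) : (dbr u v).2 = ⟦u.1, v.2⟧ + ⟦u.2, v.1⟧. Proof. by []. Qed.
Definition dE := (dD1, dD2, dZ1, dZ2, dN1, dN2, d01, d02, dbr1, dbr2).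
Lemma dbrZDl (a : R) (x y z : dual L) : dbr (a *: x + y) z = a *: dbr x z + dbr y z.
Proof. apply: dpair; rewrite !dE !brZDl //. rewrite scalerDr; zmod_solve. Qed.
Lemma dbrZDr (a : R) (x y z : dual L) : dbr x (a *: y + z) = a *: dbr x y + dbr x z.
Proof. apply: dpair; rewrite !dE !brZDr //. rewrite scalerDr; zmod_solve. Qed.
Lemma dbrxx (x : dual L) : dbr x x = 0.
Proof. apply: dpair; rewrite !dE ?brxx //; rewrite [⟦x.2, _⟧]brC; zmod_solve. Qed.
Lemma djac (x y z : dual L) : dbr x (dbr y z) + dbr y (dbr z x) + dbr z (dbr x y) = 0.
Proof.
apply: dpair; rewrite !dE; first by rewrite lie_jacobi.
rewrite !brDr ?brDl.
transitivity ((⟦x.1, ⟦y.1, z.2⟧⟧ + ⟦y.1, ⟦z.2, x.1⟧⟧ + ⟦z.2, ⟦x.1, y.1⟧⟧) +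
              (⟦x.1, ⟦y.2, z.1⟧⟧ + ⟦y.2, ⟦z.1, x.1⟧⟧ + ⟦z.1, ⟦x.1, y.2⟧⟧) +
              (⟦x.2, ⟦y.1, z.1⟧⟧ + ⟦y.1, ⟦z.1, x.2⟧⟧ + ⟦z.1, ⟦x.2, y.1⟧⟧)).
  zmod_solve.
by rewrite !lie_jacobi !addr0.
Qed.
HB.instance Definition _ := Lmodule_isLie.Build R (dual L) dbrZDl dbrZDr dbrxx djac.

Lemma dbrE (u v : dual L) : ⟦u, v⟧ = (⟦u.1, v.1⟧, ⟦u.1, v.2⟧ + ⟦u.2, v.1⟧).
Proof. by []. Qed.
Lemma dMn1 (u : dual L) n : (u *+ n).1 = u.1 *+ n.
Proof. by elim: n => [|n IH] //; rewrite !mulrS /= IH. Qed.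
Lemma dMn2 (u : dual L) n : (u *+ n).2 = u.2 *+ n.
Proof. by elim: n => [|n IH] //; rewrite !mulrS /= IH. Qed.
End Dual.
Section Dual2.
Variables (R : comPzRingType) (L : lieType R).
Lemma dL1 (u v : dual L) : ⟦u, v⟧.1 = ⟦u.1, v.1⟧. Proof. by []. Qed.
Lemma dL2 (u v : dual L) : ⟦u, v⟧.2 = ⟦u.1, v.2⟧ + ⟦u.2, v.1⟧. Proof. by []. Qed.
End Dual2.
Definition dEE := (dE, dL1, dL2, dMn1, dMn2).

Ltac done := first [ solve [hs] | Corelib.ssr.ssreflect.done ].

Section Act.
Variables (R : comPzRingType) (q : nat) (wedge : bool) (g : lieType R) (H : g -> Prop)
  (hH : lie_ideal H) (T : lieType R) (t : g -> g -> T) (c : g -> T)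
  (hr : qtensor_rels q wedge H t c) (x : g).
Let hr2 := conj hH hr.

Definition td h z : dual T := (t h z, t ⟦x, h⟧ z + t h ⟦x, z⟧).
Definition cd h : dual T := (c h, c ⟦x, h⟧).

Lemma rels_dual : qtensor_rels q wedge H td cd.
Proof.
split. { move=> a h z Hh; split; apply: dpair; rewrite !dEE /=.
  - by rewrite (r1l hr2).
  - by rewrite brZr !(tZl hr2) // scalerDr.
  - by rewrite (r1r hr2).
  - by rewrite brZr !(tZr hr2) // scalerDr. }
split. { move=> h h' z Hh Hh'; apply: dpair; rewrite !dEE /=.
  - by rewrite (r2 hr2).
  - rewrite brDr !(tDl hr2) //; zmod_solve. }
split. { move=> h z z' Hh; apply: dpair; rewrite !dEE /=.
  - by rewrite (r3 hr2).
  - rewrite brDr !(tDr hr2) //; zmod_solve. }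
split. { move=> h h' z Hh Hh'; apply: dpair; rewrite !dEE /=.
  - by rewrite (r4 hr2).
  - rewrite (jacL x h h') (jacL x h' z) (jacL x h z) !(tDl hr2) // !(tDr hr2) //.
    rewrite (r4 hr2 (h:=⟦x, h⟧) (h':=h') z) // (r4 hr2 (h:=h) (h':=⟦x, h'⟧) z) // (r4 hr2 (h:=h) (h':=h') ⟦x, z⟧) //.
    zmod_solve. }
split. { move=> h z z' Hh; apply: dpair; rewrite !dEE /=.
  - by rewrite (r5 hr2).
  - rewrite (r5 hr2 (h:=⟦x, h⟧) z z') // (jacL x z z') (tDr hr2) //.
    rewrite (r5 hr2 (h:=h) ⟦x, z⟧ z') // (r5 hr2 (h:=h) z ⟦x, z'⟧) //.
    rewrite (jacL x z' h) (jacL x z h) !(tDl hr2) //.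
    zmod_solve. }
split. { move=> h z h' z' Hh Hh'; apply: dpair; rewrite !dEE /=.
  - by rewrite (r6 hr2).
  - rewrite brDr brDl !(r6 hr2) //.
    rewrite (jacL x h z) (jacL x h' z') (tDl hr2) // (tDr hr2) //.
    zmod_solve. }
split. { move=> h' h z Hh' Hh; apply: dpair; rewrite !dEE /=.
  - by rewrite (r7 hr2).
  - rewrite brDr !(r7 hr2) //.
    rewrite (jacL x (h' *+ q) h) (jacL x (h' *+ q) z) !brMnr !(tDl hr2) // !(tDr hr2) //.
    zmod_solve. }
split. { move=> a a' h h' Hh Hh'; apply: dpair; rewrite !dEE /=.
  - by rewrite (r8 hr2).
  - by rewrite brDr !brZr (r8 hr2). }
split. { move=> h h' Hh Hh'; apply: dpair; rewrite !dEE /=.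
  - by rewrite (r9 hr2).
  - rewrite !(r9 hr2) // !brMnr; zmod_solve. }
split. { move=> h z Hh; apply: dpair; rewrite !dEE /=.
  - by rewrite (r10 hr2).
  - by rewrite (jacL x h z) (cD hr2) // !(r10 hr2) // mulrnDl. }
move=> w h Hh; apply: dpair; rewrite !dEE /=.
- by rewrite (r11 hr2).
- by rewrite (tsym hr2).
Qed.
End Act.


Lemma jacB (R : comPzRingType) (L : lieType R) (x y z : L) :
  ⟦⟦x, y⟧, z⟧ = ⟦x, ⟦y, z⟧⟧ - ⟦y, ⟦x, z⟧⟧.
Proof. rewrite jacL; zmod_solve. Qed.

Section G.
Variables (R : comPzRingType) (q : nat) (wedge : bool) (g : lieType R) (H : g -> Prop)
  (hH : lie_ideal H).

Lemma rels_g : qtensor_rels q wedge H (fun h x => ⟦h, x⟧) (fun h => h *+ q).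
Proof.
split. { by move=> a h x Hh; rewrite brZl brZr. }
split. { by move=> h h' x Hh Hh'; rewrite brDl. }
split. { by move=> h x x' Hh; rewrite brDr. }
split. { move=> h h' x Hh Hh'; rewrite (jacL h h' x); zmod_solve. }
split. { move=> h x x' Hh; rewrite (jacL h x x') [⟦⟦x', h⟧, x⟧]brC [⟦x', h⟧]brC brNr opprK.
  rewrite [⟦x, h⟧]brC brNl; zmod_solve. }
split. { by []. }
split. { by move=> h' h x Hh' Hh; rewrite jacL. }
split. { by move=> a a' h h' Hh Hh'; rewrite mulrnDl !scalerMnr. }
split. { by []. }
split. { by []. }
by move=> w h Hh; rewrite brxx.
Qed.
End G.

Section Main.
Variables (R : comPzRingType) (q : nat) (wedge : bool) (g : lieType R) (H : g -> Prop)
  (hH : lie_ideal H) (T : lieType R) (t : g -> g -> T) (c : g -> T)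
  (hT : is_qtensor_product q wedge H t c).
Let hr := hT.1.
Let hr2 := conj hH hr.

Lemma exF (x : g) : exists f : T -> dual T, lie_hom f /\
  (forall h z, H h -> f (t h z) = td t x h z) /\ (forall h, H h -> f (c h) = cd c x h).
Proof. exact: (hT.2 _ _ _ (rels_dual hH hr x)).1. Qed.

Definition F (x : g) := proj1_sig (cid (exF x)).
Lemma F_hom x : lie_hom (F x). Proof. exact: (proj2_sig (cid (exF x))).1. Qed.
Lemma F_t x h z : H h -> F x (t h z) = td t x h z. Proof. exact: (proj2_sig (cid (exF x))).2.1. Qed.
Lemma F_c x h : H h -> F x (c h) = cd c x h. Proof. exact: (proj2_sig (cid (exF x))).2.2. Qed.

Lemma F1 x u : (F x u).1 = u.
Proof.
elim/(qt_ind hH hT): u => [|a u v IHu IHv|u v IHu IHv|h z Hh|h Hh].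
- by rewrite (hom_0 (F_hom x)).
- by rewrite (hom_ZD (F_hom x)) !dEE IHu IHv.
- by rewrite (hom_br (F_hom x)) !dEE IHu IHv.
- by rewrite F_t.
- by rewrite F_c.
Qed.

Definition act (x : g) (u : T) : T := (F x u).2.

Lemma act_ZDr x a u v : act x (a *: u + v) = a *: act x u + act x v.
Proof. by rewrite /act (hom_ZD (F_hom x)) !dEE. Qed.
Lemma act_br x u v : act x ⟦u, v⟧ = ⟦act x u, v⟧ + ⟦u, act x v⟧.
Proof. by rewrite /act (hom_br (F_hom x)) !dEE !F1 addrC. Qed.
Lemma act_t x h z : H h -> act x (t h z) = t ⟦x, h⟧ z + t h ⟦x, z⟧.
Proof. by move=> Hh; rewrite /act F_t. Qed.
Lemma act_c x h : H h -> act x (c h) = c ⟦x, h⟧.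
Proof. by move=> Hh; rewrite /act F_c. Qed.
Lemma act_0 x : act x 0 = 0. Proof. exact: (lf_0 (f := act x) (act_ZDr x)). Qed.
Lemma act_D x u v : act x (u + v) = act x u + act x v. Proof. exact: (lf_D (f := act x) (act_ZDr x)). Qed.
Lemma act_N x u : act x (- u) = - act x u. Proof. exact: (lf_N (f := act x) (act_ZDr x)). Qed.
Lemma act_B x u v : act x (u - v) = act x u - act x v. Proof. exact: (lf_B (f := act x) (act_ZDr x)). Qed.
Lemma act_Z x a u : act x (a *: u) = a *: act x u. Proof. exact: (lf_Z (f := act x) (act_ZDr x)). Qed.

Lemma act_ZDl a x y u : act (a *: x + y) u = a *: act x u + act y u.
Proof.
elim/(qt_ind hH hT): u => [|a' u v IHu IHv|u v IHu IHv|h z Hh|h Hh].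
- by rewrite !act_0 scaler0 addr0.
- rewrite !act_ZDr IHu IHv !scalerDr !scalerA (mulrC a' a); zmod_solve.
- rewrite !act_br IHu IHv brZDl brZDr scalerDr; zmod_solve.
- rewrite !act_t // !brZDl (tDl hr2) // (tZl hr2) // (tDr hr2) // (tZr hr2) //.
  rewrite scalerDr; zmod_solve.
- by rewrite !act_c // brZDl (cZD hr2).
Qed.

Lemma act_brl x y u : act ⟦x, y⟧ u = act x (act y u) - act y (act x u).
Proof.
elim/(qt_ind hH hT): u => [|a u v IHu IHv|u v IHu IHv|h z Hh|h Hh].
- by rewrite !act_0 subr0.
- rewrite !act_ZDr IHu IHv scalerBr; zmod_solve.
- rewrite !act_br IHu IHv !act_D !act_br brBl brBr; zmod_solve.
- rewrite !act_t // !act_D !act_t // (jacB x y h) (jacB x y z) (tBl hr2) // (tBr hr2) //.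
  zmod_solve.
- by rewrite !act_c // (jacB x y h) (cB hr2).
Qed.

Lemma act_0l u : act 0 u = 0.
Proof. exact: (lf_0 (f := fun x => act x u) (fun a x y => act_ZDl a x y u)). Qed.

Lemma act_action : lie_action act.
Proof. split=> *; [exact: act_ZDl | exact: act_ZDr | exact: act_brl | exact: act_br]. Qed.

Lemma exXi : exists f : T -> g, lie_hom f /\
  (forall h z, H h -> f (t h z) = ⟦h, z⟧) /\ (forall h, H h -> f (c h) = h *+ q).
Proof. exact: (hT.2 _ _ _ (rels_g q wedge H)).1. Qed.

Section Xi.
Variables (xi : T -> g) (hxi : lie_hom xi) (xit : forall h z, H h -> xi (t h z) = ⟦h, z⟧)
  (xic : forall h, H h -> xi (c h) = h *+ q).

Lemma Hxi u : H (xi u).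
Proof.
elim/(qt_ind hH hT): u => [|a u v IHu IHv|u v IHu IHv|h z Hh|h Hh].
- by rewrite (hom_0 hxi).
- by rewrite (hom_ZD hxi).
- by rewrite (hom_br hxi).
- by rewrite xit.
- by rewrite xic.
Qed.

Lemma xi_act x u : xi (act x u) = ⟦x, xi u⟧.
Proof.
elim/(qt_ind hH hT): u => [|a u v IHu IHv|u v IHu IHv|h z Hh|h Hh].
- by rewrite act_0 (hom_0 hxi) br0r.
- by rewrite act_ZDr !(hom_ZD hxi) IHu IHv brZDr.
- by rewrite act_br (hom_D hxi) !(hom_br hxi) IHu IHv (jacL x).
- by rewrite act_t // (hom_D hxi) !xit // (jacL x).
- by rewrite act_c // !xic // brMnr.
Qed.

Lemma act_xi u v : act (xi u) v = ⟦u, v⟧.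
Proof.
elim/(qt_ind hH hT): u v => [|a u u' IHu IHu'|u u' IHu IHu'|h z Hh|h Hh] v.
- by rewrite (hom_0 hxi) act_0l br0l.
- by rewrite (hom_ZD hxi) act_ZDl IHu IHu' brZDl.
- by rewrite (hom_br hxi) act_brl !IHu' !IHu jacB.
- rewrite xit //. elim/(qt_ind hH hT): v => [|a v v' IHv IHv'|v v' IHv IHv'|h' z' Hh'|h' Hh'].
  + by rewrite act_0 br0r.
  + by rewrite act_ZDr IHv IHv' brZDr.
  + by rewrite act_br IHv IHv' (jacL (t h z)).
  + rewrite act_t // (r6 hr2) // (r4 hr2 (h:=⟦h, z⟧) (h':=h') z') //; zmod_solve.
  + rewrite act_c // [⟦t h z, c h'⟧]brC (r7 hr2) // [⟦⟦h, z⟧, h'⟧]brC (cN hr2) // (r10 hr2) //.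
    rewrite !brMnl (tMnl hr2) // (tMnr hr2) // -mulrnDl.
    by rewrite (r4 hr2 (h:=h') (h':=h) z) // subrK.
- rewrite xic //; elim/(qt_ind hH hT): v => [|a v v' IHv IHv'|v v' IHv IHv'|h' z' Hh'|h' Hh'].
  + by rewrite act_0 br0r.
  + by rewrite act_ZDr IHv IHv' brZDr.
  + by rewrite act_br IHv IHv' (jacL (c h)).
  + by rewrite act_t // (r7 hr2).
  + by rewrite act_c // (r9 hr2) // brMnl -brMnr (r10 hr2) // (tMnl hr2).
Qed.

Lemma cbr u k : H k -> ⟦c k, u⟧ = c ⟦k, xi u⟧.
Proof.
elim/(qt_ind hH hT): u k => [|a u v IHu IHv|u v IHu IHv|h z Hh|h Hh] k Hk.
- by rewrite br0r (hom_0 hxi) br0r (c0 hr2).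
- by rewrite brZDr IHu // IHv // (hom_ZD hxi) brZDr (cZD hr2).
- have Hu := Hxi u; have Hv := Hxi v.
  rewrite (jacL (c k)) (IHu k Hk) (IHv k Hk) (IHv ⟦k, xi u⟧) // [⟦u, _⟧]brC (IHu ⟦k, xi v⟧) //.
  rewrite (hom_br hxi) (jacL k) [⟦xi u, ⟦k, xi v⟧⟧]brC (cD hr2) // (cN hr2) //.
- rewrite (r7 hr2) // xit // (r10 hr2) // !brMnl (tMnl hr2) // (tMnr hr2) // -mulrnDl.
  by rewrite (r4 hr2 (h:=k) (h':=h) z) // subrK.
- by rewrite (r9 hr2) // xic // (r10 hr2) // (tMnl hr2).
Qed.

Lemma qxi u : u *+ q = c (xi u).
Proof.
elim/(qt_ind hH hT): u => [|a u v IHu IHv|u v IHu IHv|h z Hh|h Hh].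
- by rewrite mul0rn (hom_0 hxi) (c0 hr2).
- have Hu := Hxi u; have Hv := Hxi v.
  by rewrite mulrnDl scalerMnr IHu IHv (hom_ZD hxi) (cZD hr2).
- have Hu := Hxi u.
  by rewrite -brMnl IHu cbr // (hom_br hxi).
- by rewrite xit // (r10 hr2).
- by rewrite xic // (cMn hr2).
Qed.

Lemma crossed : q_crossed_module q xi act.
Proof.
split.
- exact: hxi.
- exact: act_action.
- exact: xi_act.
- exact: act_xi.
- by move=> u E; rewrite qxi E (c0 hr2).
Qed.
End Xi.

Lemma main_gen : exists (act : g -> T -> T) (xi : T -> g),
     lie_action act /\
         (forall x' h x, H h -> act x' (t h x) = t ⟦x', h⟧ x + t h ⟦x', x⟧) /\
         (forall x h, H h -> act x (c h) = c ⟦x, h⟧) /\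
         lie_hom xi /\
         (forall h x, H h -> xi (t h x) = ⟦h, x⟧) /\
         (forall h, H h -> xi (c h) = h *+ q) /\
         q_crossed_module q xi act.
Proof.
have [xi [hxi [xit xic]]] := exXi.
exists act, xi; split; first exact: act_action.
split; first by move=> *; apply: act_t.
split; first by move=> *; apply: act_c.
split; first exact: hxi.
split; first exact: xit.
split; first exact: xic.
exact: crossed.
Qed.
End Main.

End Aux.
Import Aux.

Theorem proposition2p5 (R : comPzRingType) (q : nat) (hq : (0 < q)%N)
  (g : lieType R) (H : g -> Prop) (hH : lie_ideal H)
  (T : lieType R) (t : g -> g -> T) (c : g -> T)
  (hT : is_qtensor_product q false H t c)
  (W : lieType R) (w : g -> g -> W) (cw : g -> W)
  (hW : is_qtensor_product q true H w cw) :
  (exists (act : g -> T -> T) (xi : T -> g),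
     lie_action act /\
         (forall x' h x, H h -> act x' (t h x) = t ⟦x', h⟧ x + t h ⟦x', x⟧) /\
         (forall x h, H h -> act x (c h) = c ⟦x, h⟧) /\
         lie_hom xi /\
         (forall h x, H h -> xi (t h x) = ⟦h, x⟧) /\
         (forall h, H h -> xi (c h) = h *+ q) /\
         q_crossed_module q xi act) /\
  (exists (act : g -> W -> W) (xi : W -> g),
     lie_action act /\
         (forall x' h x, H h -> act x' (w h x) = w ⟦x', h⟧ x + w h ⟦x', x⟧) /\
         (forall x h, H h -> act x (cw h) = cw ⟦x, h⟧) /\
         lie_hom xi /\
         (forall h x, H h -> xi (w h x) = ⟦h, x⟧) /\
         (forall h, H h -> xi (cw h) = h *+ q) /\
         q_crossed_module q xi act).
Proof.
split; [exact: (main_gen hH hT) | exact: (main_gen hH hW)].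
Qed.
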